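(* Let $n\ge 2$, $\ell\ge 1$, and let $\mathcal{L}\in\mathcal{A}(n,n-2,\ell)$. The all-one vector $\mathbf{1}\in\mathbb{Z}^n$ can be covered only by a codeword of the form $\mathbf{1}-\lambda\mathbf{e}_i$ for some $1\le i\le n$ and some integer $0\le\lambda\le\ell$.
   Context: $\mathcal{S}(n,t,\ell)=\{\mathcal{E}\in\mathbb{Z}^n: 0\le\varepsilon_i\le\ell \text{ for all } i,\ w_H(\mathcal{E})\le t\}$, with $w_H$ the number of nonzero coordinates. A lattice here is the set of integer combinations of $n$ linearly independent vectors of $\mathbb{Z}^n$. $\mathcal{A}(n,t,\ell)$ is the set of lattices $\mathcal{L}\subseteq\mathbb{Z}^n$ such that the translates $X+\mathcal{S}(n,t,\ell)$, $X\in\mathcal{L}$, are pairwise disjoint; elements of $\mathcal{L}$ are codewords. A codeword $X\in\mathcal{L}$ covers $Y\in\mathbb{Z}^n$ if $Y=X+\mathcal{E}$ for some $\mathcal{E}\in\mathcal{S}(n,n-2,\ell)$. $\mathbf{e}_i$ is the $i$-th unit vector. *)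

(* Defs.v *)
From mathcomp Require Import all_boot all_order all_algebra.
Set Implicit Arguments. Unset Strict Implicit. Unset Printing Implicit Defensive.
Import Order.TTheory GRing.Theory Num.Theory.
Local Open Scope ring_scope.

Definition wH (n : nat) (v : 'rV[int]_n) : nat := #|[set i : 'I_n | v 0 i != 0]|.

Definition inS (n t l : nat) (E : 'rV[int]_n) : Prop :=
  (forall i : 'I_n, 0 <= E 0 i <= l%:Z) /\ (wH E <= t)%N.

Definition is_lattice (n : nat) (L : 'rV[int]_n -> Prop) : Prop :=
  exists B : 'M[int]_n,
    (forall c : 'rV[int]_n, c *m B = 0 -> c = 0) /\
    (forall x : 'rV[int]_n, L x <-> exists c : 'rV[int]_n, x = c *m B).

Definition inA (n t l : nat) (L : 'rV[int]_n -> Prop) : Prop :=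
  is_lattice L /\
  forall X Y E1 E2 : 'rV[int]_n, L X -> L Y -> X != Y ->
    inS t l E1 -> inS t l E2 -> X + E1 != Y + E2.

Definition covers (n l : nat) (X Y : 'rV[int]_n) : Prop :=
  exists E : 'rV[int]_n, inS (n - 2) l E /\ Y = X + E.

Definition ones (n : nat) : 'rV[int]_n := const_mx 1.
Definition unitv (n : nat) (i : 'I_n) : 'rV[int]_n := delta_mx 0 i.

(* Main.v *)
Require Import Defs.
From mathcomp Require Import all_boot all_order all_algebra.
From mathcomp Require Import zify.
Import Order.TTheory GRing.Theory Num.Theory.
Local Open Scope ring_scope.

Theorem mainTheorem15 (n l : nat) (L : 'rV[int]_n -> Prop) :
  (2 <= n)%N -> (1 <= l)%N -> inA (n - 2) l L ->
  forall X : 'rV[int]_n, L X -> covers l X (ones n) ->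
  exists (i : 'I_n) (lam : nat),
    (lam <= l)%N /\ X = ones n - lam%:Z *: unitv i.
Proof.
move=> n2 l1 [[B [_ HB]] Hpack] X LX [E [[Erng Ewt] HE]].
have L0 : L 0 by apply/HB; exists 0; rewrite mul0mx.
have XE : X = ones n - E by rewrite HE addrK.
set S := [set k : 'I_n | E 0 k != 0].
have HS : wH E = #|S| by [].
have [big|small] := leqP 2 #|S|.
  exfalso.
  pose E1 : 'rV[int]_n := \row_k (if E 0 k == 0 then 0 else E 0 k - 1).
  pose E2 : 'rV[int]_n := \row_k (if E 0 k == 0 then 1 else 0).
  have Xn0 : X != 0.
    apply/eqP => X0; move: Ewt; rewrite HS.
    have -> : S = setT.
      apply/setP => k; rewrite !inE; apply/eqP => Ek.
      have := congr1 (fun M : 'rV[int]_n => M 0 k) XE.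
      by rewrite X0 /ones !mxE Ek.
    by rewrite cardsT card_ord; lia.
  have inS1 : inS (n - 2) l E1.
    split.
      move=> k; rewrite /E1 mxE; case: ifP => [_|Ek]; first by rewrite lexx lez_nat.
      have /andP [a b] := Erng k.
      have a' : 0 < E 0 k by rewrite lt0r a andbT Ek.
      rewrite subr_ge0 (_ : 1 <= E 0 k) /=; last by lia.
      by rewrite lerBlDr (le_trans b) // lerDl.
    apply: (leq_trans _ Ewt); apply: subset_leq_card; apply/subsetP => k.
    by rewrite !inE /E1 mxE; case: ifP.
  have inS2 : inS (n - 2) l E2.
    split.
      by move=> k; rewrite /E2 mxE; case: ifP => _; rewrite ?lexx ?ler01 ?lez_nat.
    have -> : wH E2 = #|~: S|.
      rewrite /wH; apply: eq_card => k; rewrite !inE /E2 mxE; by case: ifP.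
    have := cardsC S; rewrite card_ord; lia.
  have := Hpack X 0 E1 E2 LX L0 Xn0 inS1 inS2.
  rewrite add0r => /eqP; apply; apply/rowP => k.
  rewrite XE /E1 /E2 !mxE; case: ifP => [/eqP ->|_]; first by rewrite subr0 addr0.
  by rewrite addrC addrA subrK addrN.
have [i0 _] : exists i : 'I_n, true by exists (Ordinal (leq_trans (isT : (0 < 2)%N) n2)).
have [i Hi] : exists i : 'I_n, forall k, k != i -> E 0 k = 0.
  case: (pickP (mem S)) => [i Si | none].
    exists i => k ki; apply/eqP; apply/negPn/negP => Ek.
    have : (#|[set i; k]| <= #|S|)%N.
      apply: subset_leq_card; apply/subsetP => j; rewrite !inE.
      have Si' : E 0 i != 0 by move: Si; rewrite /= inE.
      by case/orP => /eqP ->.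
    rewrite cards2 eq_sym ki; lia.
  by exists i0 => k _; apply/eqP; move: (none k); rewrite /= inE => /negbFE.
have /andP [Ei0 Eil] := Erng i.
exists i, (absz (E 0 i)); split.
  by rewrite -lez_nat abszE ger0_norm.
rewrite abszE ger0_norm // XE; apply/rowP => k.
rewrite !mxE eqxx /=.
case: (eqVneq k i) => [->|ki]; first by rewrite mulr1.
by rewrite Hi // mulr0.
Qed.
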